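(* For any real continuous function $f\in C(\Omega)$, $$|f-f\circ\sigma|_\infty=|Kf-f|_\infty\ \ge\ \|[\mathcal D,\pi(M_f)]\|\ \ge\ |f-Lf|_\infty.$$ Moreover, if $f$ does not depend on the first coordinate (i.e. $f(x)=f(y)$ whenever $x_i=y_i$ for all $i\ge2$), both inequalities are equalities.
   Context: $\Omega=\{0,1\}^{\mathbb N}$ with the shift $\sigma$; for $a\in\{0,1\}$, $ax=(a,x_1,\dots)$. $\mu$ is the measure of maximal entropy (uniform Bernoulli product measure), $L^2(\mu)$ the Hilbert space of square-integrable functions. $|\cdot|_\infty$ is the supremum norm. Ruelle operator $L\phi(x)=\frac12(\phi(0x)+\phi(1x))$; Koopman operator $K\phi=\phi\circ\sigma$. For $f\in C(\Omega)$, $M_f$ is the multiplication operator $g\mapsto fg$ on $L^2(\mu)$. On $\mathcal H=L^2(\mu)\times L^2(\mu)$ (norm $|(\phi_1,\phi_2)|^2=|\phi_1|^2+|\phi_2|^2$), $\mathcal D=\begin{pmatrix}0&K\\ L&0\end{pmatrix}$ and $\pi(A)=\begin{pmatrix}A&0\\0&A\end{pmatrix}$; $[\mathcal D,\pi(A)]=\mathcal D\pi(A)-\pi(A)\mathcal D$. $\|\cdot\|$ is the operator norm. *)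

(* Defs.v *)
From HB Require Import structures.
From mathcomp Require Import all_boot all_order all_algebra.
From mathcomp Require Import all_classical all_reals all_analysis.
Set Implicit Arguments. Unset Strict Implicit. Unset Printing Implicit Defensive.
Import Order.TTheory GRing.Theory Num.Theory.
Import numFieldNormedType.Exports.
Local Open Scope classical_set_scope.
Local Open Scope ring_scope.

(* Omega = {0,1}^N, with 0 ~ false, 1 ~ true; the paper's coordinate x_i
   (i >= 1) is [x (i-1)]. Topology: product topology (cantor_space). *)
Definition Omega := cantor_space.

Definition shiftO (x : Omega) : Omega := fun n => x n.+1.
Definition prefixO (a : bool) (x : Omega) : Omega :=
  fun n => if n is m.+1 then x m else a.

Definition cyl (w : seq bool) : set Omega :=
  [set x | forall i, (i < size w)%N -> x i = nth false w i].
Definition cylinders : set (set Omega) := [set cyl w | w in [set: seq bool]].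

Definition OmegaM := g_sigma_algebraType cylinders.

(* mu is the measure of maximal entropy: uniform Bernoulli product measure *)
Definition max_entropy_measure (R : realType) (mu : probability OmegaM R) :=
  forall w : seq bool, mu (cyl w) = ((2%:R ^- size w : R)%:E)%E.

Section Ops.
Variable R : realType.

Definition Lop (phi : Omega -> R) : Omega -> R :=
  fun x => (phi (prefixO false x) + phi (prefixO true x)) / 2%:R.
Definition Kop (phi : Omega -> R) : Omega -> R := phi \o shiftO.

Definition supn (g : Omega -> R) : \bar R :=
  ereal_sup [set (`|g x|)%:E | x in [set: Omega]].

Variable mu : probability OmegaM R.

Definition L2 (phi : Omega -> R) : Prop :=
  measurable_fun [set: OmegaM] (phi : OmegaM -> R) /\
  (\int[mu]_x ((phi x) ^+ 2)%:E < +oo)%E.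
Definition L2norm2 (phi : Omega -> R) : \bar R :=
  (\int[mu]_x ((phi x) ^+ 2)%:E)%E.

Definition Hnorm (v : (Omega -> R) * (Omega -> R)) : \bar R :=
  sqrte (L2norm2 v.1 + L2norm2 v.2)%E.

Definition opnorm (T : (Omega -> R) * (Omega -> R) -> (Omega -> R) * (Omega -> R))
  : \bar R :=
  ereal_inf [set C%:E | C in [set C : R | 0 <= C /\
     forall v, L2 v.1 -> L2 v.2 -> (Hnorm (T v) <= C%:E * Hnorm v)%E]].

End Ops.

Section Dirac.
Variable R : realType.
Local Notation H := ((Omega -> R) * (Omega -> R))%type.

Definition Dop (v : H) : H := (Kop v.2, Lop v.1).
Definition Mop (f : Omega -> R) (g : Omega -> R) : Omega -> R := fun x => f x * g x.
Definition piop (A : (Omega -> R) -> (Omega -> R)) (v : H) : H := (A v.1, A v.2).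
Definition commD (A : (Omega -> R) -> (Omega -> R)) (v : H) : H :=
  ((Dop (piop A v)).1 \- (piop A (Dop v)).1,
   (Dop (piop A v)).2 \- (piop A (Dop v)).2).
End Dirac.

(* Main.v *)
Require Import Defs.
From HB Require Import structures.
From mathcomp Require Import all_boot all_order all_algebra.
From mathcomp Require Import all_classical all_reals all_analysis.
From mathcomp Require Import measurable_realfun.
From mathcomp Require Import ring lra.
From mathcomp Require finmap.
Import Order.TTheory GRing.Theory Num.Theory.
Import numFieldNormedType.Exports.
Local Open Scope classical_set_scope.
Local Open Scope ring_scope.

Module NB.
Import finmap.
Lemma seq_max_idx (T : eqType) (s : seq T) (P : T -> nat -> Prop) :
 (forall M, M \in s -> exists w, forall n, (w < n)%N -> P M n) ->
 exists n, forall M, M \in s -> P M n.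
Proof.
move=> H.
suff [n Hn] : exists n, forall M, M \in s -> forall m, (n <= m)%N -> P M m.
  by exists n => M /Hn; apply.
elim: s H => [|M s IH] H; first by exists 0%N.
have [n Hn] := IH (fun M' HM' => H M' (@mem_behead _ (M :: s) _ HM')).
have [w Hw] := H M (mem_head _ _).
exists (maxn n w.+1) => M'; rewrite inE => /orP [/eqP ->|HM'] m Hm.
  by apply: Hw; apply: leq_trans Hm; rewrite leq_max leqnn orbT.
by apply: Hn => //; apply: leq_trans Hm; rewrite leq_max leqnn.
Qed.

Lemma nbhs_prefix (z : Omega) (U : set Omega) : nbhs z U ->
  exists n, forall y : Omega, (forall i, (i < n)%N -> y i = z i) -> U y.
Proof.
move=> [] P [] [] Q QfinP <- [] V JV Vpz PU.
have [L Lsub VL] := QfinP _ JV.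
have key : forall M, M \in enum_fset L -> exists w : nat, forall n, (w < n)%N ->
   forall y : Omega, (forall i, (i < n)%N -> y i = z i) ->
   isSubBaseTopological.b M y.
  move=> M LM; have := Lsub _ LM; move/set_mem => [w _ [N oN NM]].
  exists w => n wn y yz.
  have zM : isSubBaseTopological.b M z.
    by move: Vpz; rewrite -VL => /(_ M LM).
  move: zM; rewrite -NM /= => zN.
  by rewrite yz.
have [n Hn] := seq_max_idx _ _ _ key.
exists n => y Hy; apply: PU; exists V => //.
rewrite -VL /= => M LM; exact: Hn.
Qed.

End NB.
Import NB.

Lemma cylT : cyl [::] = setT.
Proof. by apply/seteqP; split => x //= _ i; rewrite ltn0. Qed.

Lemma cyl_cons b w x : cyl (b :: w) x <-> x 0%N = b /\ cyl w (shiftO x).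
Proof.
split.
  move=> H; split; first exact: (H 0%N).
  by move=> i iw; apply: (H i.+1).
by move=> [x0 Hw] [|i] //= iw; apply: Hw.
Qed.

Lemma cyl_meas w : measurable (cyl w : set OmegaM).
Proof. by apply: sub_sigma_algebra; exists w. Qed.

Lemma shiftO_pre w : shiftO @^-1` cyl w = cyl (false :: w) `|` cyl (true :: w).
Proof.
apply/seteqP; split => x /=.
  move=> H; case Hx: (x 0%N); [right|left]; apply/cyl_cons; by split.
by case=> /cyl_cons [].
Qed.

Lemma prefixO_pre a b w : prefixO a @^-1` cyl (b :: w) = if a == b then cyl w else set0.
Proof.
apply/seteqP; split => x /=.
  by move/cyl_cons => [/= -> H]; rewrite eqxx.
case: eqP => [<-|//] H; apply/cyl_cons; split => //.
Qed.

Lemma shiftO_meas : measurable_fun setT (shiftO : OmegaM -> OmegaM).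
Proof.
apply: (@measurability _ _ OmegaM OmegaM setT _ cylinders) => //.
move=> _ [_ [w _ <-] <-]; rewrite setTI shiftO_pre.
by apply: measurableU; apply: cyl_meas.
Qed.

Lemma prefixO_meas a : measurable_fun setT (prefixO a : OmegaM -> OmegaM).
Proof.
apply: (@measurability _ _ OmegaM OmegaM setT _ cylinders) => //.
move=> _ [_ [[|b w] _ <-] <-]; rewrite setTI.
  by rewrite cylT preimage_setT.
by rewrite prefixO_pre; case: eqP => _ //; apply: cyl_meas.
Qed.

Definition Gcyl : set (set Omega) := [set A | cylinders A \/ A = set0].

Lemma cylI_G w w' : Gcyl (cyl w `&` cyl w').
Proof.
wlog le : w w' / (size w <= size w')%N.
  move=> H; case: (leqP (size w) (size w')) => [/H //|/ltnW /H].
  by rewrite setIC.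
case: (pselect (forall i, (i < size w)%N -> nth false w i = nth false w' i)) => P.
  left; exists w' => //; apply/seteqP; split => x /=; last by case.
  move=> H; split => // i iw; rewrite P //; apply: H; exact: leq_trans iw le.
right; apply/seteqP; split => x //= [H1 H2]; apply: P => i iw.
by rewrite -H1 // H2 //; exact: leq_trans iw le.
Qed.

Lemma Gcyl_setI : setI_closed Gcyl.
Proof.
move=> A B [[w _ <-]|->] [[w' _ <-]|->]; rewrite ?set0I ?setI0; try by right.
exact: cylI_G.
Qed.

Lemma OmegaM_measE : @measurable _ OmegaM = <<s Gcyl >>.
Proof.
apply/seteqP; split.
  apply: sub_sigma_algebra2 => A HA; by left.
apply: smallest_sub; first exact: smallest_sigma_algebra.
move=> A [HA|->]; first exact: sub_sigma_algebra.
exact: (@measurable0 _ OmegaM).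
Qed.

Lemma cyl_unique (R : realType) (m1 m2 : {measure set OmegaM -> \bar R}) :
  (forall w, m1 (cyl w) = m2 (cyl w)) -> (m1 setT < +oo)%E ->
  forall A, measurable A -> m1 A = m2 A.
Proof.
move=> H12 Hfin A mA.
apply: (@measure_unique _ R OmegaM Gcyl (fun _ => setT)) => //.
- exact: OmegaM_measE.
- exact: Gcyl_setI.
- move=> _; left; exists [::] => //; exact: cylT.
- by rewrite bigcup_const.
- by move=> B [[w _ <-]|->]; rewrite ?measure0.
Qed.


Section pfdef.
Context (R : realType) (mu : {measure set OmegaM -> \bar R}) (g : OmegaM -> OmegaM)
  (mg : measurable_fun setT g).
Definition pf (mg' : measurable_fun setT g) : set OmegaM -> \bar R := pushforward mu g.
Let pf0 : pf mg set0 = 0%E.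
Proof. by rewrite /pf /pushforward preimage_set0 measure0. Qed.
Let pf_ge0 A : (0 <= pf mg A)%E.
Proof. exact: measure_ge0. Qed.
Let pf_sa : semi_sigma_additive (pf mg).
Proof.
move=> F mF tF mUF; rewrite /pf /pushforward preimage_bigcup.
apply: measure_semi_sigma_additive.
- by move=> n; rewrite -[X in measurable X]setTI; exact: mg.
- apply/trivIsetP => /= i j _ _ ij; rewrite -preimage_setI.
  by move/trivIsetP : tF => /(_ _ _ _ _ ij) ->//; rewrite preimage_set0.
- by rewrite -preimage_bigcup -[X in measurable X]setTI; exact: mg.
Qed.
HB.instance Definition _ := isMeasure.Build _ _ _ (pf mg) pf0 pf_ge0 pf_sa.
End pfdef.
Arguments pf {R} mu {g} mg'.

Lemma half_sum (R : realType) (n : nat) :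
  ((2%:R ^- n.+1 : R)%:E + (2%:R ^- n.+1)%:E = (2%:R ^- n)%:E)%E.
Proof.
rewrite -EFinD; congr EFin; rewrite exprS invfM.
have h : (2%:R : R) != 0 by rewrite pnatr_eq0.
have h2 : (2%:R : R) ^+ n != 0 by rewrite expf_neq0.
by field.
Qed.

Lemma shift_inv (R : realType) (mu : probability OmegaM R) (Hmu : max_entropy_measure mu) :
  forall A, measurable A -> pf mu shiftO_meas A = mu A.
Proof.
apply: cyl_unique.
  move=> w; rewrite /pf /pushforward /=; rewrite shiftO_pre measureU; try exact: cyl_meas.
  apply: etrans; first (apply: congr2; [exact: (Hmu (false :: w)) | exact: (Hmu (true :: w))]).
  by rewrite /= half_sum; symmetry; exact: Hmu.
  apply/seteqP; split => x //= [/cyl_cons [H0 _] /cyl_cons [H1 _]]; by rewrite H0 in H1.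
rewrite /pf /pushforward /= preimage_setT.
have h : mu setT = 1%E := probability_setT mu.
by rewrite h ltry.
Qed.

Lemma prefix_sum (R : realType) (mu : probability OmegaM R) (Hmu : max_entropy_measure mu) :
  forall A, measurable A ->
  measure_add (pf mu (prefixO_meas false)) (pf mu (prefixO_meas true)) A =
  mscale (2%:R)%:nng mu A.
Proof.
apply: cyl_unique.
  move=> w; apply: etrans; first exact: measure_addE.
  rewrite /= /pf /pushforward /mscale /=.
  case: w => [|b w].
    rewrite cylT !preimage_setT.
    have h : mu setT = 1%E := probability_setT mu.
    by rewrite h mule1 -EFinD.
  rewrite !prefixO_pre.
  have h1 : mu (cyl w) = (2%:R ^- size w)%:E := Hmu w.
  have h2 : mu (cyl (b :: w)) = (2%:R ^- (size w).+1)%:E := Hmu (b :: w).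
  have e : ((2%:R : R) * 2%:R ^- (size w).+1 = 2%:R ^- size w).
    rewrite exprS invfM; have h : (2%:R : R) != 0 by rewrite pnatr_eq0.
    have h3 : (2%:R : R) ^+ size w != 0 by rewrite expf_neq0.
    by field.
  by case: b h2 => /= h2; rewrite measure0 ?add0e ?adde0 h1 h2 -EFinM e.
have h : mu setT = 1%E := probability_setT mu.
rewrite (_ : _ setT = 2%:R%:E) ?ltry //.
apply: etrans; first exact: measure_addE.
by rewrite /= /pf /pushforward !preimage_setT h -EFinD.
Qed.


Section ints.
Context (R : realType) (mu : probability OmegaM R) (Hmu : max_entropy_measure mu).
Local Open Scope ereal_scope.

Lemma int_shift (h : OmegaM -> \bar R) : measurable_fun [set: OmegaM] h -> (forall x, 0 <= h x) ->
  \int[mu]_x h (shiftO x) = \int[mu]_x h x.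
Proof.
move=> mh h0.
have := @ge0_integral_pushforward _ _ OmegaM OmegaM R shiftO shiftO_meas mu setT h
  measurableT mh (fun y _ => h0 y).
rewrite preimage_setT => <-.
change (\int[pf mu shiftO_meas]_x h x = \int[mu]_x h x).
apply: eq_measure_integral => A mA _.
exact: (@shift_inv R mu Hmu A mA).
Qed.

Lemma int_prefix (h : OmegaM -> \bar R) : measurable_fun [set: OmegaM] h -> (forall x, 0 <= h x) ->
  \int[mu]_x h (prefixO false x) + \int[mu]_x h (prefixO true x) = 2%:R%:E * \int[mu]_x h x.
Proof.
move=> mh h0.
have := @ge0_integral_pushforward _ _ OmegaM OmegaM R (prefixO false) (prefixO_meas false) mu setT h
  measurableT mh (fun y _ => h0 y).
rewrite preimage_setT => <-.
have := @ge0_integral_pushforward _ _ OmegaM OmegaM R (prefixO true) (prefixO_meas true) mu setT h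
  measurableT mh (fun y _ => h0 y).
rewrite preimage_setT => <-.
have E1 := @ge0_integral_measure_add _ OmegaM R (pf mu (prefixO_meas false)) (pf mu (prefixO_meas true))
  setT measurableT h (fun y _ => h0 y) mh.
rewrite /pf in E1; rewrite -E1.
have E2 := @ge0_integral_mscale _ OmegaM R mu setT measurableT ((2%:R : R)%:nng)%R h mh (fun y _ => h0 y).
rewrite /= in E2; rewrite -E2.
apply: eq_measure_integral => A mA _.
exact: (@prefix_sum R mu Hmu A mA).
Qed.
End ints.


Lemma cyl_mkseq (x y : Omega) n : cyl (mkseq x n) y <-> (forall i, (i < n)%N -> y i = x i).
Proof.
rewrite /cyl /= size_mkseq; split => H i ilt; by rewrite H // nth_mkseq.
Qed.

Lemma open_cyl_union (S : set Omega) :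
  (forall x, S x -> exists n, forall y : Omega, (forall i, (i < n)%N -> y i = x i) -> S y) ->
  measurable (S : set OmegaM).
Proof.
move=> HS.
pose C k : set OmegaM := if unpickle k is Some w then
   (if pselect (cyl w `<=` S) then cyl w else set0) else set0.
have -> : S = \bigcup_k C k.
  apply/seteqP; split => x.
    move=> Sx; have [n Hn] := HS x Sx.
    exists (pickle (mkseq x n)) => //; rewrite /C pickleK.
    destruct (pselect _) as [H0|H]; first by apply/cyl_mkseq.
    by case: H => y /cyl_mkseq; apply: Hn.
  move=> [k _]; rewrite /C; destruct (unpickle k) as [w|] => //.
  by destruct (pselect _) as [H|] => // /H.
apply: bigcupT_measurable => k; rewrite /C.
destruct (unpickle k) as [w|]; last exact: measurable0.
by destruct (pselect _); [exact: cyl_meas | exact: measurable0].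
Qed.

Lemma cont_meas (R : realType) (f : Omega -> R) : continuous f ->
  measurable_fun [set: OmegaM] (f : OmegaM -> R).
Proof.
move=> Hf; apply: (measurability _ (RGenOpens.measurableE R)).
move=> _ [_ [a [b ->]] <-]; rewrite setTI.
apply: open_cyl_union => x /= Hx.
apply: nbhs_prefix.
have H : nbhs (f x) (fun r => r \in `]a, b[) by apply: open_nbhs_nbhs; split => //; exact: itv_open.
exact: (Hf x _ H).
Qed.

Set Implicit Arguments. Unset Strict Implicit.


Lemma sqrte_le_mul (R : realType) (C : R) (a b : \bar R) : 0 <= C -> (0 <= b)%E ->
  (sqrte a <= C%:E * sqrte b)%E = (a <= (C ^+ 2)%:E * b)%E.
Proof.
move=> C0 b0.
have -> : (C%:E = sqrte (C ^+ 2)%:E).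
  by rewrite EFin_expe sqrte_sqr gee0_abs // lee_fin.
rewrite -sqrteM ?lee_fin ?exprn_ge0 // lee_sqrt // mule_ge0 // lee_fin exprn_ge0 //.
Qed.

Lemma sq_bound (R : realType) (c a0 a1 u0 u1 : R) :
  a0 ^+ 2 <= c ^+ 2 -> a1 ^+ 2 <= c ^+ 2 ->
  ((a0 * u0 + a1 * u1) / 2%:R) ^+ 2 <= c ^+ 2 * ((u0 ^+ 2 + u1 ^+ 2) / 2%:R).
Proof.
move=> h0 h1.
have e1 : (a0 * u0 + a1 * u1) ^+ 2 <= 2%:R * (a0 ^+ 2 * u0 ^+ 2 + a1 ^+ 2 * u1 ^+ 2).
  have : 0 <= (a0 * u0 - a1 * u1) ^+ 2 by apply: sqr_ge0.
  move=> H; nra.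
have e2 : a0 ^+ 2 * u0 ^+ 2 <= c ^+ 2 * u0 ^+ 2.
  by apply: ler_wpM2r => //; apply: sqr_ge0.
have e3 : a1 ^+ 2 * u1 ^+ 2 <= c ^+ 2 * u1 ^+ 2.
  by apply: ler_wpM2r => //; apply: sqr_ge0.
rewrite expr_div_n.
have -> : (2%:R : R) ^+ 2 = 4%:R by rewrite expr2 -natrM.
nra.
Qed.

Lemma sq_le (R : realType) (a c : R) : `|a| <= c -> a ^+ 2 <= c ^+ 2.
Proof.
move=> h; rewrite -(real_normK (num_real a)).
have := normr_ge0 a; move=> h0; nra.
Qed.

Section upper.
Context (R : realType) (mu : probability OmegaM R) (Hmu : max_entropy_measure mu)
  (f : Omega -> R) (Hf : continuous f).

Let mf : measurable_fun [set: OmegaM] (f : OmegaM -> R) := @cont_meas R f Hf.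

Lemma meas_Lop (g : Omega -> R) : measurable_fun [set: OmegaM] (g : OmegaM -> R) ->
  measurable_fun [set: OmegaM] (Lop g : OmegaM -> R).
Proof.
move=> mg; rewrite /Lop; apply: measurable_funM; last exact: measurable_cst.
apply: measurable_funD.
  exact: (measurableT_comp mg (prefixO_meas false)).
exact: (measurableT_comp mg (prefixO_meas true)).
Qed.

Lemma meas_Kop (g : Omega -> R) : measurable_fun [set: OmegaM] (g : OmegaM -> R) ->
  measurable_fun [set: OmegaM] (Kop g : OmegaM -> R).
Proof. move=> mg; exact: (measurableT_comp mg shiftO_meas). Qed.

Lemma meas_Mop (g : Omega -> R) : measurable_fun [set: OmegaM] (g : OmegaM -> R) ->
  measurable_fun [set: OmegaM] (Mop f g : OmegaM -> R).
Proof. move=> mg; exact: (measurable_funM mf mg). Qed.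

Lemma meas_sq (g : Omega -> R) : measurable_fun [set: OmegaM] (g : OmegaM -> R) ->
  measurable_fun [set: OmegaM] (fun x : OmegaM => (g x ^+ 2)%:E).
Proof. move=> mg; apply/measurable_EFinP; exact: measurable_funX. Qed.

Lemma upper_bound (c : R) : 0 <= c -> (forall x, `|Kop f x - f x| <= c) ->
  forall v, L2 mu v.1 -> L2 mu v.2 ->
  (Hnorm mu (commD (Mop f) v) <= c%:E * Hnorm mu v)%E.
Proof.
move=> c0 Hc [v1 v2] [/= mv1 _] [/= mv2 _].
have c20 : 0 <= c ^+ 2 by apply: exprn_ge0.
rewrite /Hnorm /L2norm2 /= sqrte_le_mul //; last first.
  by rewrite adde_ge0 // integral_ge0 // => x _; rewrite lee_fin sqr_ge0.
set B1 := (\int[mu]_x (v1 x ^+ 2)%:E)%E.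
set B2 := (\int[mu]_x (v2 x ^+ 2)%:E)%E.
have B10 : (0 <= B1)%E by rewrite integral_ge0 // => x _; rewrite lee_fin sqr_ge0.
have B20 : (0 <= B2)%E by rewrite integral_ge0 // => x _; rewrite lee_fin sqr_ge0.
have I1 : (\int[mu]_x (((commD (Mop f) (v1, v2)).1 x) ^+ 2)%:E <= (c ^+ 2)%:E * B2)%E.
  have mT : measurable_fun [set: OmegaM] ((commD (Mop f) (v1, v2)).1 : OmegaM -> R).
    rewrite /commD /Dop /piop /=.
    apply: measurable_funB; first exact: meas_Kop (meas_Mop mv2).
    exact: meas_Mop (meas_Kop mv2).
  apply: (@le_trans _ _ (\int[mu]_x ((c ^+ 2)%:E * ((v2 (shiftO x)) ^+ 2)%:E))%E).
    apply: ge0_le_integral => //.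
    - by move=> x _; rewrite lee_fin sqr_ge0.
    - exact: meas_sq.
    - apply/measurable_EFinP; apply: measurable_funM; first exact: measurable_cst.
      exact: measurable_funX (meas_Kop mv2).
    move=> x _; rewrite -EFinM lee_fin /commD /Dop /piop /Mop /Kop /=.
    have -> : (f (shiftO x) * v2 (shiftO x) - f x * v2 (shiftO x)) ^+ 2 =
      (f (shiftO x) - f x) ^+ 2 * v2 (shiftO x) ^+ 2 by ring.
    apply: ler_wpM2r; first exact: sqr_ge0.
    exact: sq_le (Hc x).
  rewrite ge0_integralZl_EFin //.
  - rewrite (@int_shift R mu Hmu (fun y => (v2 y ^+ 2)%:E)) //.
      exact: meas_sq.
    by move=> y; rewrite lee_fin sqr_ge0.
  - by move=> x _; rewrite lee_fin sqr_ge0.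
  - exact: (meas_sq (meas_Kop mv2)).
have I2 : (\int[mu]_x (((commD (Mop f) (v1, v2)).2 x) ^+ 2)%:E <= (c ^+ 2)%:E * B1)%E.
  have mT : measurable_fun [set: OmegaM] ((commD (Mop f) (v1, v2)).2 : OmegaM -> R).
    rewrite /commD /Dop /piop /=.
    apply: measurable_funB; first exact: meas_Lop (meas_Mop mv1).
    exact: meas_Mop (meas_Lop mv1).
  pose h := fun y : OmegaM => (v1 y ^+ 2)%:E.
  have mh : measurable_fun [set: OmegaM] h by exact: meas_sq.
  have h0 : forall y, (0 <= h y)%E by move=> y; rewrite lee_fin sqr_ge0.
  apply: (@le_trans _ _ (\int[mu]_x ((c ^+ 2 / 2%:R)%:E *
      (h (prefixO false x) + h (prefixO true x))))%E).
    apply: ge0_le_integral => //.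
    - by move=> x _; rewrite lee_fin sqr_ge0.
    - exact: meas_sq.
    - apply: emeasurable_funM; first exact: measurable_cst.
      apply: emeasurable_funD.
        exact: (measurableT_comp mh (prefixO_meas false)).
      exact: (measurableT_comp mh (prefixO_meas true)).
    move=> x _; rewrite /h -EFinD -EFinM lee_fin /commD /Dop /piop /Mop /Lop /=.
    have -> : (f (prefixO false x) * v1 (prefixO false x) +
               f (prefixO true x) * v1 (prefixO true x)) / 2%:R -
              f x * ((v1 (prefixO false x) + v1 (prefixO true x)) / 2%:R) =
      ((f (prefixO false x) - f x) * v1 (prefixO false x) +
       (f (prefixO true x) - f x) * v1 (prefixO true x)) / 2%:R by field.
    have -> : c ^+ 2 / 2%:R * (v1 (prefixO false x) ^+ 2 + v1 (prefixO true x) ^+ 2) =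
      c ^+ 2 * ((v1 (prefixO false x) ^+ 2 + v1 (prefixO true x) ^+ 2) / 2%:R) by field.
    apply: sq_bound; apply: sq_le; rewrite distrC.
      exact: (Hc (prefixO false x)).
    exact: (Hc (prefixO true x)).
  have mh0 : measurable_fun [set: OmegaM] (fun x => h (prefixO false x)).
    exact: (measurableT_comp mh (prefixO_meas false)).
  have mh1 : measurable_fun [set: OmegaM] (fun x => h (prefixO true x)).
    exact: (measurableT_comp mh (prefixO_meas true)).
  rewrite ge0_integralZl_EFin //; first last.
  - by rewrite divr_ge0.
  - exact: emeasurable_funD.
  - by move=> x _; rewrite adde_ge0.
  rewrite ge0_integralD //.
  rewrite (@int_prefix R mu Hmu h mh h0) muleA -EFinM.
  by rewrite divfK // pnatr_eq0.
have -> : ((c ^+ 2)%:E * (B1 + B2) = (c ^+ 2)%:E * B2 + (c ^+ 2)%:E * B1)%E.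
  by rewrite ge0_muleDr // addeC.
exact: leeD I1 I2.
Qed.
End upper.


Section lower.
Context (R : realType) (mu : probability OmegaM R) (Hmu : max_entropy_measure mu)
  (f : Omega -> R) (Hf : continuous f).

Lemma near_close (p : Omega) (e : R) : 0 < e ->
  exists n, forall y : Omega, (forall i, (i < n)%N -> y i = p i) -> `|f p - f y| < e.
Proof.
move=> e0; apply: nbhs_prefix.
have /cvgrPdist_lt H := @Hf p.
exact: H.
Qed.

Lemma Lf_close (x : Omega) (e : R) : 0 < e ->
  exists n, forall y : Omega, (forall i, (i < n)%N -> y i = x i) ->
    `|(f x - Lop f x) - (f y - Lop f y)| < e.
Proof.
move=> e0.
have e40 : 0 < e / 4%:R by rewrite divr_gt0.
have [n0 H0] := near_close x e40.
have [n1 H1] := near_close (prefixO false x) e40.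
have [n2 H2] := near_close (prefixO true x) e40.
exists (maxn n0 (maxn n1 n2)) => y Hy.
have A0 := H0 y (fun i hi => Hy i (leq_trans hi (leq_maxl _ _))).
have pre : forall a n, (n <= maxn n1 n2)%N -> forall i, (i < n)%N ->
    prefixO a y i = prefixO a x i.
  move=> a n hn [|i] hi //=; apply: Hy.
  apply: leq_trans (leq_maxr _ _); apply: leq_trans hn; exact: ltnW.
have A1 := H1 (prefixO false y) (pre false n1 (leq_maxl _ _)).
have A2 := H2 (prefixO true y) (pre true n2 (leq_maxr _ _)).
rewrite /Lop.
set a := f x; set b := f y; set a1 := f (prefixO false x); set b1 := f (prefixO false y).
set a2 := f (prefixO true x); set b2 := f (prefixO true y).
have -> : a - (a1 + a2) / 2%:R - (b - (b1 + b2) / 2%:R) =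
  (a - b) - ((a1 - b1) / 2%:R + (a2 - b2) / 2%:R) by field.
apply: (le_lt_trans (ler_normB _ _)).
apply: (le_lt_trans (lerD (lexx _) (ler_normD _ _))).
rewrite !normrM normfV normr_nat.
have le : e / 4%:R + (e / 4%:R * 2%:R^-1 + e / 4%:R * 2%:R^-1) <= e by lra.
apply: lt_le_trans le.
apply: ltrD => //.
apply: ltrD; rewrite ltr_pM2r ?invr_gt0 //.
Qed.

Lemma indic_sq (A : set Omega) (y : Omega) : (\1_A y : R) ^+ 2 = \1_A y.
Proof. by rewrite /indic; case: (y \in A); rewrite ?expr1n ?expr0n. Qed.

Lemma indic_ge0' (A : set Omega) (y : Omega) : 0 <= (\1_A y : R).
Proof. by rewrite /indic; case: (y \in A). Qed.

Lemma lower_bound (C : R) : 0 <= C ->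
  (forall v, L2 mu v.1 -> L2 mu v.2 ->
    (Hnorm mu (commD (Mop f) v) <= C%:E * Hnorm mu v)%E) ->
  forall x, `|f x - Lop f x| <= C.
Proof.
move=> C0 HC x; rewrite leNgt; apply/negP => Hlt.
set e := `|f x - Lop f x| - C.
have e0 : 0 < e by rewrite subr_gt0.
have e20 : 0 < e / 2%:R by rewrite divr_gt0.
have [N HN] := Lf_close x e20.
set w := mkseq x N.
set c' := C + e / 2%:R.
have c'0 : 0 <= c' by rewrite addr_ge0 // ltW.
have Hw : forall y, cyl w y -> c' <= `|f y - Lop f y|.
  move=> y /cyl_mkseq Hy; have := HN y Hy.
  rewrite /c' => H.
  have : `|f x - Lop f x| <= `|(f x - Lop f x) - (f y - Lop f y)| + `|f y - Lop f y|.
    by have := ler_normD ((f x - Lop f x) - (f y - Lop f y)) (f y - Lop f y); rewrite subrK.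
  rewrite /e in H e0 *; move=> H3; lra.
pose v1 : Omega -> R := fun z => \1_(cyl w) (shiftO z).
pose v2 : Omega -> R := fun _ => 0.
have mv1 : measurable_fun [set: OmegaM] (v1 : OmegaM -> R).
  exact: (measurableT_comp (measurable_indic (cyl_meas w)) shiftO_meas).
have mv2 : measurable_fun [set: OmegaM] (v2 : OmegaM -> R) by exact: measurable_cst.
have mcyl : mu (cyl w) = (2%:R ^- N)%:E.
  by rewrite (Hmu w) /w size_mkseq.
have Iv1 : L2norm2 mu v1 = (2%:R ^- N)%:E.
  rewrite /L2norm2 /v1.
  under eq_integral do rewrite indic_sq.
  rewrite (@int_shift R mu Hmu (fun y => (\1_(cyl w) y : R)%:E)).
  - by rewrite integral_indic // ?setIT ?mcyl //; exact: cyl_meas.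
  - apply/measurable_EFinP; exact: measurable_indic (cyl_meas w).
  - by move=> y; rewrite lee_fin indic_ge0'.
have Iv2 : L2norm2 mu v2 = 0%E.
  rewrite /L2norm2 /v2.
  under eq_integral do rewrite expr0n /=.
  exact: integral0.
have L1 : L2 mu (v1, v2).1.
  by split; [exact: mv1 | move: Iv1; rewrite /L2norm2 /= => ->; exact: ltry].
have L2' : L2 mu (v1, v2).2.
  by split; [exact: mv2 | move: Iv2; rewrite /L2norm2 /= => ->; exact: ltry].
have := HC (v1, v2) L1 L2'.
rewrite /Hnorm sqrte_le_mul //; last by rewrite /= Iv1 Iv2 adde0 lee_fin.
rewrite /= Iv1 Iv2 adde0.
have T1 : L2norm2 mu (commD (Mop f) (v1, v2)).1 = 0%E.
  rewrite /L2norm2 /commD /Dop /piop /Mop /Kop /v2 /=.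
  under eq_integral do rewrite !mulr0 subrr expr0n /=.
  exact: integral0.
rewrite T1 add0e.
have mT2 : measurable_fun [set: OmegaM] ((commD (Mop f) (v1, v2)).2 : OmegaM -> R).
  rewrite /commD /Dop /piop /=.
  apply: measurable_funB; first exact: meas_Lop (meas_Mop Hf mv1).
  apply: (meas_Mop Hf). apply: meas_Lop. exact: mv1.
have T2 : ((c' ^+ 2)%:E * (2%:R ^- N)%:E <= L2norm2 mu (commD (Mop f) (v1, v2)).2)%E.
  have -> : ((2%:R ^- N)%:E = \int[mu]_y (\1_(cyl w) y : R)%:E)%E.
    by rewrite integral_indic ?setIT ?mcyl //; exact: cyl_meas.
  have mi : measurable_fun [set: OmegaM] (fun y : OmegaM => (\1_(cyl w) y : R)%:E).
    apply/measurable_EFinP; exact: measurable_indic (cyl_meas w).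
  have i0 : forall y : OmegaM, [set: OmegaM] y -> (0 <= (\1_(cyl w) y : R)%:E)%E.
    by move=> y _; rewrite lee_fin indic_ge0'.
  have c20 : 0 <= c' ^+ 2 by rewrite exprn_ge0.
  rewrite -(ge0_integralZl_EFin _ _ i0 mi c20) //.
  apply: ge0_le_integral => //.
  - by move=> y _; rewrite -EFinM lee_fin mulr_ge0 ?exprn_ge0 ?indic_ge0'.
  - apply/measurable_EFinP; apply: measurable_funM; first exact: measurable_cst.
    exact: measurable_indic (cyl_meas w).
  - exact: meas_sq mT2.
  move=> y _; rewrite -EFinM lee_fin /commD /Dop /piop /Mop /Lop /v1 /=.
  change (shiftO (prefixO false y)) with y; change (shiftO (prefixO true y)) with y.
  rewrite /indic; case: (boolP (y \in cyl w)) => Hy /=.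
    rewrite mulr1 !mulr1.
    have -> : (f (prefixO false y) + f (prefixO true y)) / 2%:R - f y * ((1 + 1) / 2%:R) =
      - (f y - (f (prefixO false y) + f (prefixO true y)) / 2%:R).
      have h2 : (2%:R : R) != 0 by rewrite pnatr_eq0.
      by field.
    rewrite sqrrN -(real_normK (num_real (f y - _))).
    have := Hw y (set_mem Hy); rewrite /Lop => H.
    by rewrite lerXn2r // nnegrE ?normr_ge0.
  by rewrite !mulr0 !addr0 !mul0r mulr0 subrr expr0n.
have := le_trans T2 => /[apply].
rewrite -EFinM lee_fin ler_pM2r; last by rewrite invr_gt0 exprn_gt0.
move=> Hcc.
have : C < c' by rewrite /c' ltrDl.
move=> HCc; nra.
Qed.
End lower.

Unset Implicit Arguments. Set Strict Implicit.


Theorem theorem2p10 (R : realType) (mu : probability OmegaM R)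
  (Hmu : max_entropy_measure mu) (f : Omega -> R) (Hf : continuous f) :
  [/\ supn (fun x => (f x - f (shiftO x))%R) = supn (fun x => (Kop f x - f x)%R),
      (opnorm mu (commD (Mop f)) <= supn (fun x => (Kop f x - f x)%R))%E,
      (supn (fun x => (f x - Lop f x)%R) <= opnorm mu (commD (Mop f)))%E &
      ((forall x y : Omega, (forall i, x i.+1 = y i.+1) -> f x = f y) ->
        supn (fun x => (Kop f x - f x)%R) = opnorm mu (commD (Mop f)) /\
        opnorm mu (commD (Mop f)) = supn (fun x => (f x - Lop f x)%R))].
Proof.
have P1 : supn (fun x => (f x - f (shiftO x))%R) = supn (fun x => (Kop f x - f x)%R).
  rewrite /supn; congr ereal_sup; apply/seteqP; split => _ [x _ <-]; exists x => //;
  by rewrite /Kop /= distrC.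
have P2 : (opnorm mu (commD (Mop f)) <= supn (fun x => (Kop f x - f x)%R))%E.
  set S := supn _.
  have Hub : forall x, ((`|Kop f x - f x|)%:E <= S)%E.
    by move=> x; apply: ereal_sup_ubound; exists x.
  have S0 : (0 <= S)%E.
    by apply: le_trans (Hub (fun _ => false)); rewrite lee_fin.
  move: Hub S0; case: S => [c| |] Hub S0; last by [].
  - have c0 : 0 <= c by rewrite -lee_fin.
    apply: ereal_inf_lbound; exists c => //; split => //.
    apply: (upper_bound Hmu Hf c0) => x.
    by rewrite -lee_fin.
  - exact: leey.
have P3 : (supn (fun x => (f x - Lop f x)%R) <= opnorm mu (commD (Mop f)))%E.
  apply: le_ereal_inf_tmp => _ [C [C0 HC] <-].
  apply: ge_ereal_sup => _ [x _ <-].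
  rewrite lee_fin; exact: (lower_bound Hmu Hf C0 HC).
split => // H.
have E : supn (fun x => (Kop f x - f x)%R) = supn (fun x => (f x - Lop f x)%R).
  rewrite /supn; congr ereal_sup; apply/seteqP; split => _ [x _ <-].
    exists (shiftO x) => //; congr (EFin (Num.norm _)).
    rewrite /Kop /Lop /=.
    have -> : f (prefixO false (shiftO x)) = f x by apply: H.
    have -> : f (prefixO true (shiftO x)) = f x by apply: H.
    have h2 : (2%:R : R) != 0 by rewrite pnatr_eq0.
    by field.
  exists (prefixO false x) => //; congr (EFin (Num.norm _)).
  rewrite /Kop /Lop /=.
  change (shiftO (prefixO false x)) with x.
  have -> : f (prefixO true x) = f (prefixO false x) by apply: H.
  have h2 : (2%:R : R) != 0 by rewrite pnatr_eq0.
  by field.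
split; apply/eqP; rewrite eq_le.
  by rewrite P2 E P3.
by rewrite -E P2 E P3.
Qed.
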